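(* Let $(Y_i,D_i,Z_i,X_i)$, $i=1,\dots,N$, be data with $Y_i\in\mathbb{R}$, $D_i,Z_i\in\{0,1\}$, $X_i\in\mathbb{R}^k$, where $X_i$ includes a constant component (equal to $1$ for all $i$). Let $F(x,\alpha)\in(0,1)$ be a parametric model for the instrument propensity score and let $\hat\alpha_{cb}$ satisfy the covariate balancing equations $$\frac1N\sum_{i=1}^N X_i\,\frac{Z_i-F(X_i,\hat\alpha_{cb})}{F(X_i,\hat\alpha_{cb})\big(1-F(X_i,\hat\alpha_{cb})\big)}=0 .$$ Write $\hat p_i=F(X_i,\hat\alpha_{cb})$, $\hat\kappa_{i1}=D_i\frac{Z_i-\hat p_i}{\hat p_i(1-\hat p_i)}$, $\hat\kappa_{i0}=(1-D_i)\frac{(1-Z_i)-(1-\hat p_i)}{\hat p_i(1-\hat p_i)}$, and define $$\tilde\tau_{t}=\Big[\sum_i\frac{D_iZ_i}{\hat p_i}-\sum_i\frac{D_i(1-Z_i)}{1-\hat p_i}\Big]^{-1}\Big[\sum_i\frac{Y_iZ_i}{\hat p_i}-\sum_i\frac{Y_i(1-Z_i)}{1-\hat p_i}\Big],\qquad \tilde\tau_{a,1}=\Big[\sum_i\hat\kappa_{i1}\Big]^{-1}\sum_i Y_i\frac{Z_i-\hat p_i}{\hat p_i(1-\hat p_i)},$$ $$\tilde\tau_{a,0}=\Big[\sum_i\hat\kappa_{i0}\Big]^{-1}\sum_i Y_i\frac{Z_i-\hat p_i}{\hat p_i(1-\hat p_i)},\qquad \tilde\tau_{a,10}=\Big[\sum_i\hat\kappa_{i1}\Big]^{-1}\sum_i\hat\kappa_{i1}Y_i-\Big[\sum_i\hat\kappa_{i0}\Big]^{-1}\sum_i\hat\kappa_{i0}Y_i,$$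 $$\hat\tau_{cb}=\frac{\big[\sum_i\frac{Z_i}{\hat p_i}\big]^{-1}\sum_i\frac{Y_iZ_i}{\hat p_i}-\big[\sum_i\frac{1-Z_i}{1-\hat p_i}\big]^{-1}\sum_i\frac{Y_i(1-Z_i)}{1-\hat p_i}}{\big[\sum_i\frac{Z_i}{\hat p_i}\big]^{-1}\sum_i\frac{D_iZ_i}{\hat p_i}-\big[\sum_i\frac{1-Z_i}{1-\hat p_i}\big]^{-1}\sum_i\frac{D_i(1-Z_i)}{1-\hat p_i}}$$ (assuming the denominators are nonzero). Then $\tilde\tau_t$ ($=\tilde\tau_{a,1}$), $\tilde\tau_{a,0}$ and $\tilde\tau_{a,10}$ are numerically identical and equal to $\hat\tau_{cb}$.
   Context: $\hat\alpha_{cb}$ is the just-identified covariate balancing estimator of the propensity score parameter (Imai–Ratkovic type), defined by the displayed sample moment equations. *)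

(* Defs.v *)
From HB Require Import structures.
From mathcomp Require Import all_boot all_order all_algebra.
Set Implicit Arguments. Unset Strict Implicit. Unset Printing Implicit Defensive.
Import Order.TTheory GRing.Theory Num.Theory.
Local Open Scope ring_scope.

Section Estimators.
Variables (R : realFieldType) (N : nat).
Variables (Y D Z p : 'I_N -> R).

Definition cbw (i : 'I_N) : R := (Z i - p i) / (p i * (1 - p i)).

Definition kappa1 (i : 'I_N) : R := D i * ((Z i - p i) / (p i * (1 - p i))).
Definition kappa0 (i : 'I_N) : R :=
  (1 - D i) * (((1 - Z i) - (1 - p i)) / (p i * (1 - p i))).

Definition tau_t_den : R :=
  \sum_i D i * Z i / p i - \sum_i D i * (1 - Z i) / (1 - p i).
Definition tau_t : R :=
  tau_t_den^-1 *
  (\sum_i Y i * Z i / p i - \sum_i Y i * (1 - Z i) / (1 - p i)).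

Definition tau_a1 : R := (\sum_i kappa1 i)^-1 * \sum_i Y i * cbw i.
Definition tau_a0 : R := (\sum_i kappa0 i)^-1 * \sum_i Y i * cbw i.
Definition tau_a10 : R :=
  (\sum_i kappa1 i)^-1 * (\sum_i kappa1 i * Y i)
  - (\sum_i kappa0 i)^-1 * (\sum_i kappa0 i * Y i).

Definition sZ1 : R := \sum_i Z i / p i.
Definition sZ0 : R := \sum_i (1 - Z i) / (1 - p i).
Definition tau_cb_den : R :=
  sZ1^-1 * (\sum_i D i * Z i / p i) - sZ0^-1 * (\sum_i D i * (1 - Z i) / (1 - p i)).
Definition tau_cb : R :=
  (sZ1^-1 * (\sum_i Y i * Z i / p i) - sZ0^-1 * (\sum_i Y i * (1 - Z i) / (1 - p i)))
  / tau_cb_den.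
End Estimators.

(* Main.v *)
Require Import Defs.
From HB Require Import structures.
From mathcomp Require Import all_boot all_order all_algebra.
From mathcomp Require Import ring lra.
Import Order.TTheory GRing.Theory Num.Theory.
Local Open Scope ring_scope.

Theorem proposition2 (R : realFieldType) (N k : nat)
  (Y D Z : 'I_N -> R) (X : 'I_N -> 'rV[R]_k)
  (F : 'rV[R]_k -> 'rV[R]_k -> R) (alpha_cb : 'rV[R]_k) :
  (forall i, D i = 0 \/ D i = 1) ->
  (forall i, Z i = 0 \/ Z i = 1) ->
  (exists j : 'I_k, forall i, X i 0 j = 1) ->
  (forall x a, 0 < F x a < 1) ->
  (N%:R)^-1 *: \sum_i ((Z i - F (X i) alpha_cb)
       / (F (X i) alpha_cb * (1 - F (X i) alpha_cb))) *: X i = 0 ->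
  let p := fun i => F (X i) alpha_cb in
  tau_t_den D Z p != 0 ->
  \sum_i kappa1 D Z p i != 0 ->
  \sum_i kappa0 D Z p i != 0 ->
  sZ1 Z p != 0 -> sZ0 Z p != 0 ->
  tau_cb_den D Z p != 0 ->
  [/\ tau_t Y D Z p = tau_a1 Y D Z p,
      tau_t Y D Z p = tau_a0 Y D Z p,
      tau_t Y D Z p = tau_a10 Y D Z p &
      tau_t Y D Z p = tau_cb Y D Z p].
Proof.
move=> HD HZ [j Hj] HF Hbal p Ht Hk1 Hk0 HS1 HS0 Hcb.
have hp i : p i != 0 by have /andP[h1 _] := HF (X i) alpha_cb; rewrite /p gt_eqF.
have hq i : 1 - p i != 0.
  by have /andP[_ h2] := HF (X i) alpha_cb; rewrite /p subr_eq0 eq_sym lt_eqF.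
have hw i : cbw Z p i = Z i / p i - (1 - Z i) / (1 - p i).
  rewrite /cbw; case: (HZ i) => ->; field; by rewrite ?hp ?hq.
have hs : \sum_i cbw Z p i = 0.
  have := congr1 (fun M : 'rV[R]_k => M 0 j) Hbal.
  rewrite /= !mxE summxE /= => /eqP; rewrite mulf_eq0 invr_eq0 pnatr_eq0 /=.
  case/orP=> [/eqP N0|/eqP H].
    by apply: big1 => -[m hm]; exfalso; move: hm; rewrite N0.
  rewrite -[RHS]H; apply: eq_bigr => i _; rewrite !mxE Hj mulr1 /cbw.
  done.
have eS : sZ1 Z p = sZ0 Z p.
  apply/eqP; rewrite -subr_eq0; apply/eqP.
  rewrite /sZ1 /sZ0 -sumrB -[RHS]hs; apply: eq_bigr => i _; by rewrite hw.
have eT : tau_t_den D Z p = \sum_i kappa1 D Z p i.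
  rewrite /tau_t_den -sumrB; apply: eq_bigr => i _.
  rewrite /kappa1 -/(cbw Z p i) hw; ring.
have eN : \sum_i Y i * Z i / p i - \sum_i Y i * (1 - Z i) / (1 - p i)
          = \sum_i Y i * cbw Z p i.
  rewrite -sumrB; apply: eq_bigr => i _; rewrite hw; ring.
have e0 : \sum_i kappa0 D Z p i = \sum_i kappa1 D Z p i.
  have -> : \sum_i kappa0 D Z p i = \sum_i (kappa1 D Z p i - cbw Z p i).
    apply: eq_bigr => i _; rewrite /kappa0 /kappa1 /cbw; ring.
  by rewrite sumrB hs subr0.
have eY : \sum_i kappa0 D Z p i * Y i
          = \sum_i kappa1 D Z p i * Y i - \sum_i Y i * cbw Z p i.
  rewrite -sumrB; apply: eq_bigr => i _; rewrite /kappa0 /kappa1 /cbw; ring.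
have eD : \sum_i D i * Z i / p i - \sum_i D i * (1 - Z i) / (1 - p i)
          = \sum_i kappa1 D Z p i by [].
have ta1 : tau_t Y D Z p = tau_a1 Y D Z p by rewrite /tau_t /tau_a1 eN eT.
split => //.
- by rewrite ta1 /tau_a1 /tau_a0 e0.
- rewrite ta1 /tau_a1 /tau_a10 e0 eY; field; by rewrite -e0.
- rewrite ta1 /tau_a1 /tau_cb /tau_cb_den -eS -!mulrBr eN eD.
  field; by rewrite HS1 Hk1.
Qed.
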